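(* Let $(A,\mathcal H)$ be a commutative Hopf algebroid. A Hopf ideal $I$ of $\mathcal H$ is normal if and only if $(\mathscr G_A,\mathscr G_{\mathcal H/I})$ is a normal affine subgroupoid of $(\mathscr G_A,\mathscr G_{\mathcal H})$; consequently $I\mapsto(\mathscr G_A,\mathscr G_{\mathcal H/I})$ is a bijection between normal Hopf ideals of $\mathcal H$ and normal affine subgroupoids of $(\mathscr G_A,\mathscr G_{\mathcal H})$.
   Context: A commutative Hopf algebroid $(A,\mathcal H)$ over a field $\Bbbk$: commutative $\Bbbk$-algebras $A,\mathcal H$ with algebra maps $s,t:A\to\mathcal H$, $\varepsilon:\mathcal H\to A$, $\Delta:\mathcal H\to\mathcal H\otimes_A\mathcal H$ (left factor an $A$-module via $t$, right via $s$), $\mathcal S:\mathcal H\to\mathcal H$ such that $(\mathcal H,\Delta,\varepsilon)$ is a coassociative counital $A$-coring, $\mathcal Ss=t$, $\mathcal St=s$, $\mathcal S^2=\mathrm{id}$, $\sum\mathcal S(u_1)u_2=t\varepsilon(u)$, $\sum u_1\mathcal S(u_2)=s\varepsilon(u)$ ($\Delta(u)=\sum u_1\otimes_Au_2$). A Hopf ideal is an ideal $I$ with $\varepsilon(I)=0$, $\Delta(I)\subseteq$ image of $\mathcal H\otimes_AI+I\otimes_A\mathcal H$, $\mathcal S(I)\subseteq I$. Let $\langle s-t\rangle$ be the ideal generated by all $s(a)-t(a)$ and $\overline{\mathcal H}=\mathcal H/\langle s-t\rangle$ with classes $\bar x$, an $A$-algebra via $\eta(a)=\overline{s(a)}$.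 A Hopf ideal $I$ is normal if $\langle s-t\rangle\subseteq I$ and for every $x\in I$, $\sum\overline{x_2}\otimes_A\mathcal S(x_1)x_3\in\overline{\mathcal H}\otimes_A\mathcal H$ lies in the image of $(I/\langle s-t\rangle)\otimes_A\mathcal H$ ($\mathcal H$ an $A$-module via $s$). For a commutative $\Bbbk$-algebra $R$, $\mathscr G_A(R)=\mathrm{CAlg}_\Bbbk(A,R)$, $\mathscr G_{\mathcal H}(R)=\mathrm{CAlg}_\Bbbk(\mathcal H,R)$ form a groupoid (objects, arrows) with source $\varphi\mapsto\varphi s$, target $\varphi\mapsto\varphi t$, identity $x\mapsto x\varepsilon$, composition $(\psi\bullet\varphi)(h)=\sum\varphi(h_1)\psi(h_2)$, naturally in $R$. For a Hopf ideal $I$ with projection $\pi$, $\mathscr G_{\mathcal H/I}(R)=\mathrm{CAlg}_\Bbbk(\mathcal H/I,R)$, embedded by $f\mapsto f\pi$, is a wide subgroupoid (an affine subgroupoid). It is a normal affine subgroupoid if for every $R$ it is a normal subgroupoid of $(\mathscr G_A(R),\mathscr G_{\mathcal H}(R))$, meaning: it has the same objects, every arrow in it has equal source and target, and for every arrow $g$ of $\mathscr G_{\mathcal H}(R)$ and every arrow $f$ of the subgroupoid with source and target equal to the source of $g$, $gfg^{-1}$ is in the subgroupoid. *)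

(* Defs.v *)
From mathcomp Require Import ssreflect ssrfun ssrbool eqtype ssrnat seq bigop ssralg.
Set Implicit Arguments. Unset Strict Implicit. Unset Printing Implicit Defensive.
Import GRing.Theory.
Local Open Scope ring_scope.

(* MathComp's comAlgType excludes the zero ring, so a commutative      *)
(* k-algebra is encoded as a commutative (possibly zero) ring together *)
(* with its structure ring map k -> R.                                 *)

Definition ring_hom (R S : pzRingType) (f : R -> S) : Prop :=
  [/\ forall x y, f (x + y) = f x + f y,
      forall x y, f (x * y) = f x * f y
    & f 1 = 1].

Record kalg (k : fieldType) : Type := KAlg {
  kcarrier :> comPzRingType;
  kunit : k -> kcarrier;
  kunit_hom : ring_hom kunit }.

Definition kalg_hom (k : fieldType) (A B : kalg k) (f : A -> B) : Prop :=
  ring_hom f /\ forall c : k, f (kunit A c) = kunit B c.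

Definition is_ideal (R : pzRingType) (I : R -> Prop) : Prop :=
  [/\ I 0, (forall x y, I x -> I y -> I (x + y)) & (forall r x, I x -> I (r * x))].

Definition ideal_gen (R : pzRingType) (S : R -> Prop) : R -> Prop :=
  fun x => exists rs : seq (R * R),
    (forall p, p \in rs -> S p.2) /\ x = \sum_(p <- rs) p.1 * p.2.

(* Tensor products of commutative algebras B (x)_A C = pushouts in     *)
(* CAlg_k of B <-f- A -g-> C, given by their universal property.       *)
Record pushout (k : fieldType) (A B C : kalg k) (f : A -> B) (g : A -> C) : Type :=
 Pushout {
  po_T : kalg k;
  po_i1 : B -> po_T;
  po_i2 : C -> po_T;
  po_i1_hom : kalg_hom po_i1;
  po_i2_hom : kalg_hom po_i2;
  po_comm : forall a, po_i1 (f a) = po_i2 (g a);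
  po_lift : forall R : kalg k, (B -> R) -> (C -> R) -> po_T -> R;
  po_lift_spec : forall (R : kalg k) (u : B -> R) (v : C -> R),
     kalg_hom u -> kalg_hom v -> (forall a, u (f a) = v (g a)) ->
     [/\ kalg_hom (@po_lift R u v),
         forall b, @po_lift R u v (po_i1 b) = u b
       & forall c, @po_lift R u v (po_i2 c) = v c];
  po_uniq : forall (R : kalg k) (h1 h2 : po_T -> R),
     kalg_hom h1 -> kalg_hom h2 ->
     (forall b, h1 (po_i1 b) = h2 (po_i1 b)) ->
     (forall c, h1 (po_i2 c) = h2 (po_i2 c)) -> forall x, h1 x = h2 x }.
Arguments pushout {k A B C} f g.
Arguments po_lift {k A B C f g} p R u v.

Record quotient_alg (k : fieldType) (H : kalg k) (J : H -> Prop) : Type :=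
 QuotientAlg {
  q_T : kalg k;
  q_map : H -> q_T;
  q_hom : kalg_hom q_map;
  q_surj : forall y, exists x, q_map x = y;
  q_ker : forall x, q_map x = 0 <-> J x }.
Arguments quotient_alg {k H} J.

(* ha_T2 = H (x)_A H (left factor an A-module via t, right via s),     *)
(* ha_T3 = (H (x)_A H) (x)_A H.                                        *)
Record hopf_algebroid (k : fieldType) (A H : kalg k) : Type := HopfAlgebroid {
  ha_s : A -> H;
  ha_t : A -> H;
  ha_eps : H -> A;
  ha_S : H -> H;
  ha_T2 : pushout ha_t ha_s;
  ha_Delta : H -> po_T ha_T2;
  ha_T3 : pushout (fun a => po_i2 ha_T2 (ha_t a)) ha_s;
  ha_s_hom : kalg_hom ha_s;
  ha_t_hom : kalg_hom ha_t;
  ha_eps_hom : kalg_hom ha_eps;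
  ha_S_hom : kalg_hom ha_S;
  ha_Delta_hom : kalg_hom ha_Delta;
  (* Delta and eps are A-bimodule maps (A-coring structure) *)
  ha_Delta_s : forall a, ha_Delta (ha_s a) = po_i1 ha_T2 (ha_s a);
  ha_Delta_t : forall a, ha_Delta (ha_t a) = po_i2 ha_T2 (ha_t a);
  ha_eps_s : forall a, ha_eps (ha_s a) = a;
  ha_eps_t : forall a, ha_eps (ha_t a) = a;
  (* coassociativity: (Delta (x) id) o Delta = (id (x) Delta) o Delta *)
  ha_coassoc : forall h,
    po_lift ha_T2 (po_T ha_T3)
      (fun x => po_i1 ha_T3 (ha_Delta x)) (po_i2 ha_T3) (ha_Delta h) =
    po_lift ha_T2 (po_T ha_T3)
      (fun x => po_i1 ha_T3 (po_i1 ha_T2 x))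
      (fun x => po_lift ha_T2 (po_T ha_T3)
                  (fun y => po_i1 ha_T3 (po_i2 ha_T2 y)) (po_i2 ha_T3)
                  (ha_Delta x))
      (ha_Delta h);
  (* counit: (eps (x) id) Delta = id = (id (x) eps) Delta *)
  ha_counit_l : forall h,
    po_lift ha_T2 H (fun x => ha_s (ha_eps x)) id (ha_Delta h) = h;
  ha_counit_r : forall h,
    po_lift ha_T2 H id (fun x => ha_t (ha_eps x)) (ha_Delta h) = h;
  ha_S_s : forall a, ha_S (ha_s a) = ha_t a;
  ha_S_t : forall a, ha_S (ha_t a) = ha_s a;
  ha_S_invol : forall h, ha_S (ha_S h) = h;
  ha_antipode_l : forall u,
    po_lift ha_T2 H ha_S id (ha_Delta u) = ha_t (ha_eps u);
  ha_antipode_r : forall u,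
    po_lift ha_T2 H id ha_S (ha_Delta u) = ha_s (ha_eps u) }.

Unset Implicit Arguments.
Section HopfIdeals.
Variables (k : fieldType) (A H : kalg k) (HA : hopf_algebroid A H).

Local Notation s := (ha_s HA).
Local Notation t := (ha_t HA).
Local Notation T2 := (ha_T2 HA).
Local Notation T3 := (ha_T3 HA).
Local Notation Delta := (ha_Delta HA).

Definition hopf_ideal (I : H -> Prop) : Prop :=
  [/\ is_ideal I,
      forall x, I x -> ha_eps HA x = 0,
      forall x, I x -> ideal_gen
                 (fun y => exists z, I z /\ (y = po_i1 T2 z \/ y = po_i2 T2 z))
                 (Delta x)
    & forall x, I x -> I (ha_S HA x)].

Definition st_ideal : H -> Prop :=
  ideal_gen (fun y => exists a, y = s a - t a).

(* Normal Hopf ideals, relative to a quotient Hbar = H / <s - t> and to the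
   tensor product Q = Hbar (x)_A H  (Hbar an A-algebra via eta = q o s,
   H an A-module via s). *)
Definition normality_map
    (Hb : quotient_alg st_ideal)
    (Q : pushout (fun a => q_map Hb (s a)) s) : H -> po_T Q :=
  fun x =>
    po_lift T3 (po_T Q)
      (po_lift T2 (po_T Q)
         (fun y => po_i2 Q (ha_S HA y)) (fun y => po_i1 Q (q_map Hb y)))
      (po_i2 Q)
      (* x_1 (x) x_2 (x) x_3 *)
      (po_lift T2 (po_T T3)
         (fun y => po_i1 T3 (Delta y)) (po_i2 T3) (Delta x)).

Definition normal_hopf_ideal
    (Hb : quotient_alg st_ideal)
    (Q : pushout (fun a => q_map Hb (s a)) s) (I : H -> Prop) : Prop :=
  hopf_ideal I /\
  (forall x, st_ideal x -> I x) /\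
  (forall x, I x ->
     ideal_gen (fun y => exists z, I z /\ y = po_i1 Q (q_map Hb z))
               (normality_map Hb Q x)).

Definition gsrc (R : kalg k) (phi : H -> R) : A -> R := fun a => phi (s a).
Definition gtgt (R : kalg k) (phi : H -> R) : A -> R := fun a => phi (t a).
Definition gid (R : kalg k) (x : A -> R) : H -> R := fun h => x (ha_eps HA h).
(* (psi . phi)(h) = sum phi(h_1) psi(h_2) *)
Definition gcomp (R : kalg k) (psi phi : H -> R) : H -> R :=
  fun h => po_lift T2 R phi psi (Delta h).

(* arrows of the affine subgroupoid G_{H/I}(R), i.e. the image of
   CAlg_k(H/I, R) in CAlg_k(H, R) under f |-> f o pi *)
Definition sub_arrow (I : H -> Prop) (R : kalg k) (phi : H -> R) : Prop :=
  kalg_hom phi /\ forall x, I x -> phi x = 0.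

Definition is_inverse (R : kalg k) (g g' : H -> R) : Prop :=
  kalg_hom g' /\
  (forall a, gsrc R g' a = gtgt R g a) /\ (forall a, gtgt R g' a = gsrc R g a) /\
  (forall h, gcomp R g' g h = gid R (gsrc R g) h) /\
  (forall h, gcomp R g g' h = gid R (gtgt R g) h).

(* normal subgroupoid at R (it is wide, i.e. has all objects, by construction) *)
Definition normal_subgroupoid_at (I : H -> Prop) (R : kalg k) : Prop :=
  (forall f, sub_arrow I R f -> forall a, gsrc R f a = gtgt R f a) /\
  (forall g f, kalg_hom g -> sub_arrow I R f ->
     (forall a, gsrc R f a = gsrc R g a) -> (forall a, gtgt R f a = gsrc R g a) ->
     forall g', is_inverse R g g' -> sub_arrow I R (gcomp R g (gcomp R f g'))).

Definition normal_affine_subgroupoid (I : H -> Prop) : Prop :=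
  forall R : kalg k, normal_subgroupoid_at I R.

Definition same_subgroupoid (I J : H -> Prop) : Prop :=
  forall (R : kalg k) (phi : H -> R), sub_arrow I R phi <-> sub_arrow J R phi.

End HopfIdeals.
Arguments hopf_ideal {k A H} HA I.
Arguments st_ideal {k A H} HA _.
Arguments normality_map {k A H HA} Hb Q _.
Arguments normal_hopf_ideal {k A H HA} Hb Q I.
Arguments gsrc {k A H} HA {R} phi _.
Arguments gtgt {k A H} HA {R} phi _.
Arguments gid {k A H} HA {R} x _.
Arguments gcomp {k A H} HA {R} psi phi _.
Arguments sub_arrow {k H} I {R} phi.
Arguments is_inverse {k A H} HA {R} g g'.
Arguments normal_subgroupoid_at {k A H} HA I R.
Arguments normal_affine_subgroupoid {k A H} HA I.
Arguments same_subgroupoid {k H} I J.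

(* Main.v *)
From HB Require Import structures.
Require Import Defs.
From mathcomp Require Import ssreflect ssrfun ssrbool eqtype ssrnat seq choice bigop ssralg ring.
From Stdlib Require Import ClassicalEpsilon FunctionalExtensionality PropExtensionality.
Set Implicit Arguments. Unset Strict Implicit. Unset Printing Implicit Defensive.
Import GRing.Theory.
Local Open Scope ring_scope.

Section Quot.
Variables (k : fieldType) (B : kalg k) (J : B -> Prop) (HJ : is_ideal J).

Lemma J0 : J 0. Proof. by case: HJ. Qed.
Lemma JD x y : J x -> J y -> J (x + y). Proof. by case: HJ => _ H _; apply: H. Qed.
Lemma JM r x : J x -> J (r * x). Proof. by case: HJ => _ _ H; apply: H. Qed.
Lemma JMr r x : J x -> J (x * r). Proof. by rewrite mulrC; apply: JM. Qed.
Lemma JN x : J x -> J (- x). Proof. by move=> h; rewrite -mulN1r; apply: JM. Qed.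
Lemma JB x y : J x -> J y -> J (x - y). Proof. by move=> hx hy; apply: JD => //; apply: JN. Qed.

Definition canon (x : B) : B := epsilon (inhabits (0:B)) (fun y => J (x - y)).
Lemma canonP x : J (x - canon x).
Proof. by apply: (epsilon_spec (inhabits (0:B)) (fun y => J (x - y))); exists x; rewrite subrr; apply: J0. Qed.
Lemma canon_eq x y : J (x - y) -> canon x = canon y.
Proof.
move=> h; rewrite /canon.
have -> : (fun z => J (x - z)) = (fun z => J (y - z)); last by [].
apply: functional_extensionality => z.
apply: propositional_extensionality; split => hz.
  by have := JB hz h; have -> : x - z - (x - y) = y - z by ring.
by have := JD h hz; have -> : x - y + (y - z) = x - z by ring.
Qed.
Lemma canon_idem x : canon (canon x) = canon x.
Proof. apply: canon_eq; have := JN (canonP x); by rewrite opprB. Qed.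

Definition QT := {x : B | canon x == x}.
HB.instance Definition _ := Choice.on QT.
Definition Mk (x : B) : QT := exist _ (canon x) (introT eqP (canon_idem x)).
Lemma MkE x y : Mk x = Mk y <-> J (x - y).
Proof.
split; last by move=> h; apply: val_inj; rewrite /= (canon_eq h).
move=> /(congr1 val) /= e.
have := JB (canonP x) (canonP y); rewrite e.
by have -> : x - canon y - (y - canon y) = x - y by ring.
Qed.
Lemma Mk_val (a : QT) : Mk (val a) = a.
Proof. by apply: val_inj => /=; case: a => x /= /eqP. Qed.
Lemma Mk_can x : Mk (canon x) = Mk x.
Proof. by apply/MkE; have := JN (canonP x); rewrite opprB. Qed.

Definition qzero := Mk 0.
Definition qone := Mk 1.
Definition qadd (a b : QT) := Mk (val a + val b).
Definition qopp (a : QT) := Mk (- val a).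
Definition qmul (a b : QT) := Mk (val a * val b).

Lemma qaddE x y : qadd (Mk x) (Mk y) = Mk (x + y).
Proof.
apply/MkE => /=.
have -> : canon x + canon y - (x + y) = - ((x - canon x) + (y - canon y)).
  by ring.
by apply: JN; apply: JD; apply: canonP.
Qed.
Lemma qoppE x : qopp (Mk x) = Mk (- x).
Proof.
apply/MkE => /=; have -> : - canon x - - x = x - canon x by ring.
exact: canonP.
Qed.
Lemma qmulE x y : qmul (Mk x) (Mk y) = Mk (x * y).
Proof.
apply/MkE => /=.
have -> : canon x * canon y - x * y = - ((x - canon x) * canon y + x * (y - canon y)).
  by ring.
by apply: JN; apply: JD; [apply: JMr | apply: JM]; apply: canonP.
Qed.

Lemma QT_ind (P : QT -> Prop) : (forall x, P (Mk x)) -> forall a, P a.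
Proof. by move=> h a; rewrite -(Mk_val a). Qed.

Lemma qaddA : associative qadd.
Proof. by elim/QT_ind=> x; elim/QT_ind=> y; elim/QT_ind=> z; rewrite !qaddE addrA. Qed.
Lemma qaddC : commutative qadd.
Proof. by elim/QT_ind=> x; elim/QT_ind=> y; rewrite !qaddE addrC. Qed.
Lemma qadd0 : left_id qzero qadd.
Proof. by elim/QT_ind=> x; rewrite /qzero qaddE add0r. Qed.
Lemma qaddN : left_inverse qzero qopp qadd.
Proof. by elim/QT_ind=> x; rewrite qoppE qaddE addNr. Qed.
HB.instance Definition _ := GRing.isZmodule.Build QT qaddA qaddC qadd0 qaddN.
Lemma qmulA : associative qmul.
Proof. by elim/QT_ind=> x; elim/QT_ind=> y; elim/QT_ind=> z; rewrite !qmulE mulrA. Qed.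
Lemma qmulC : commutative qmul.
Proof. by elim/QT_ind=> x; elim/QT_ind=> y; rewrite !qmulE mulrC. Qed.
Lemma qmul1 : left_id qone qmul.
Proof. by elim/QT_ind=> x; rewrite /qone qmulE mul1r. Qed.
Lemma qmulD : left_distributive qmul qadd.
Proof. elim/QT_ind=> x; elim/QT_ind=> y; elim/QT_ind=> z. by rewrite qaddE !qmulE qaddE mulrDl. Qed.
HB.instance Definition _ := GRing.Zmodule_isComPzRing.Build QT qmulA qmulC qmul1 qmulD.

Lemma Mk_hom : ring_hom (Mk : B -> QT).
Proof. by split => [x y|x y|] //; [exact: (esym (qaddE x y)) | exact: (esym (qmulE x y))]. Qed.

Definition qunit (c : k) : QT := Mk (kunit B c).
Lemma qunit_hom : ring_hom qunit.
Proof.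
case: (kunit_hom B) => hD hM h1; split => [x y|x y|]; rewrite /qunit.
- by rewrite hD; case: Mk_hom => ->.
- by rewrite hM; case: Mk_hom => _ ->.
- by rewrite h1.
Qed.
Definition QA : kalg k := KAlg qunit_hom.

Definition quot : quotient_alg J.
Proof.
refine (@QuotientAlg k B J QA Mk _ _ _).
- by split => //; exact: Mk_hom.
- by move=> y; exists (val y); apply: Mk_val.
- move=> x; have -> : (0 : QA) = Mk 0 by [].
  by rewrite MkE subr0.
Defined.
End Quot.

Section Gen.
Variable k : fieldType.

Lemma hom_comp (A B C : kalg k) (f : A -> B) (g : B -> C) :
  kalg_hom f -> kalg_hom g -> kalg_hom (fun x => g (f x)).
Proof.
move=> [[fD fM f1] fk] [[gD gM g1] gk]; split; first split.
- by move=> x y; rewrite fD gD.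
- by move=> x y; rewrite fM gM.
- by rewrite f1 g1.
- by move=> c; rewrite fk gk.
Qed.

Lemma hom_id (A : kalg k) : kalg_hom (fun x : A => x).
Proof. by []. Qed.

Lemma hom0 (A B : kalg k) (f : A -> B) : kalg_hom f -> f 0 = 0.
Proof.
move=> [[fD _ _] _]; have := fD 0 0; rewrite addr0 => e.
by have := congr1 (fun z => z - f 0) e; rewrite subrr addrK.
Qed.

Lemma homB (A B : kalg k) (f : A -> B) : kalg_hom f -> forall x y, f (x - y) = f x - f y.
Proof.
move=> hf x y; have [[fD _ _] _] := hf.
have e : f (x - y) + f y = f x by rewrite -fD subrK.
by rewrite -e addrK.
Qed.

Lemma homD (A B : kalg k) (f : A -> B) : kalg_hom f -> forall x y, f (x + y) = f x + f y.
Proof. by case=> [[]]. Qed.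
Lemma homM (A B : kalg k) (f : A -> B) : kalg_hom f -> forall x y, f (x * y) = f x * f y.
Proof. by case=> [[]]. Qed.

Lemma hom_sum (A B : kalg k) (f : A -> B) (rs : seq (A * A)) : kalg_hom f ->
  f (\sum_(p <- rs) p.1 * p.2) = \sum_(p <- rs) f p.1 * f p.2.
Proof.
move=> hf; elim: rs => [|p rs IH]; first by rewrite !big_nil hom0.
by rewrite !big_cons homD // homM // IH.
Qed.

Lemma ideal_gen_kill (A B : kalg k) (f : A -> B) (S : A -> Prop) x :
  kalg_hom f -> (forall y, S y -> f y = 0) -> ideal_gen S x -> f x = 0.
Proof.
move=> hf hS [rs [hrs ->]]; rewrite hom_sum //.
by rewrite big_seq big1 // => p /hrs /hS ->; rewrite mulr0.
Qed.

Lemma ideal_gen_ideal (A : kalg k) (S : A -> Prop) : is_ideal (ideal_gen S).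
Proof.
split.
- by exists [::]; split => //; rewrite big_nil.
- move=> x y [r1 [h1 ->]] [r2 [h2 ->]]; exists (r1 ++ r2); split.
    by move=> p; rewrite mem_cat => /orP [/h1|/h2].
  by rewrite big_cat.
- move=> r x [rs [h ->]]; exists [seq (r * p.1, p.2) | p <- rs]; split.
    by move=> p /mapP [q /h hq ->].
  rewrite big_map mulr_sumr; apply: eq_bigr => p _ /=; by rewrite mulrA.
Qed.

Lemma ideal_gen_in (A : kalg k) (S : A -> Prop) x : S x -> ideal_gen S x.
Proof.
move=> hx; exists [:: (1, x)]; split; last by rewrite big_seq1 mul1r.
by move=> p; rewrite inE => /eqP ->.
Qed.

Lemma ideal_gen_sub (A : kalg k) (S I : A -> Prop) x : is_ideal I ->
  (forall y, S y -> I y) -> ideal_gen S x -> I x.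
Proof.
move=> [I0 ID IM] hS [rs [h ->]]; elim: rs h => [|p rs IH] h; first by rewrite big_nil.
rewrite big_cons; apply: ID; first by apply: IM; apply: hS; apply: h; rewrite inE eqxx.
by apply: IH => q hq; apply: h; rewrite inE hq orbT.
Qed.

Section PO.
Variables (A B C : kalg k) (f : A -> B) (g : A -> C) (p : pushout f g).

Lemma lift_hom (R : kalg k) u v : kalg_hom u -> kalg_hom v ->
  (forall a, u (f a) = v (g a)) -> kalg_hom (po_lift p R u v).
Proof. by move=> hu hv c; case: (po_lift_spec p hu hv c). Qed.
Lemma lift_i1 (R : kalg k) u v : kalg_hom u -> kalg_hom v ->
  (forall a, u (f a) = v (g a)) -> forall b, po_lift p R u v (po_i1 p b) = u b.
Proof. by move=> hu hv c; case: (po_lift_spec p hu hv c). Qed.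
Lemma lift_i2 (R : kalg k) u v : kalg_hom u -> kalg_hom v ->
  (forall a, u (f a) = v (g a)) -> forall b, po_lift p R u v (po_i2 p b) = v b.
Proof. by move=> hu hv c; case: (po_lift_spec p hu hv c). Qed.

Lemma lift_uniq (R : kalg k) u v (h : po_T p -> R) : kalg_hom u -> kalg_hom v ->
  (forall a, u (f a) = v (g a)) -> kalg_hom h ->
  (forall b, h (po_i1 p b) = u b) -> (forall c, h (po_i2 p c) = v c) ->
  forall x, h x = po_lift p R u v x.
Proof.
move=> hu hv c hh e1 e2; apply: po_uniq => //; first exact: lift_hom.
  by move=> b; rewrite lift_i1.
by move=> b; rewrite lift_i2.
Qed.

Lemma lift_nat (R S : kalg k) (phi : R -> S) u v : kalg_hom phi -> kalg_hom u -> kalg_hom v ->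
  (forall a, u (f a) = v (g a)) ->
  forall x, phi (po_lift p R u v x) = po_lift p S (fun y => phi (u y)) (fun y => phi (v y)) x.
Proof.
move=> hphi hu hv c; apply: lift_uniq.
- exact: hom_comp.
- exact: hom_comp.
- by move=> a; rewrite c.
- by apply: hom_comp => //; exact: lift_hom.
- by move=> b; rewrite lift_i1.
- by move=> b; rewrite lift_i2.
Qed.

Lemma lift_ext (R : kalg k) u v u' v' : kalg_hom u -> kalg_hom v ->
  (forall a, u (f a) = v (g a)) -> u =1 u' -> v =1 v' ->
  forall x, po_lift p R u v x = po_lift p R u' v' x.
Proof.
move=> hu hv c eu ev.
have eu' : u = u' by apply: functional_extensionality.
have ev' : v = v' by apply: functional_extensionality.
by rewrite eu' ev'.
Qed.
End PO.

Lemma factor (B : kalg k) (J : B -> Prop) (Qb : quotient_alg J) (R : kalg k) (f : B -> R) :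
  kalg_hom f -> (forall x, J x -> f x = 0) ->
  exists fb : q_T Qb -> R, kalg_hom fb /\ forall x, fb (q_map Qb x) = f x.
Proof.
move=> hf hJ.
pose pre y := proj1_sig (constructive_indefinite_description _ (@q_surj _ _ _ Qb y)).
have preP y : q_map Qb (pre y) = y := proj2_sig (constructive_indefinite_description _ (@q_surj _ _ _ Qb y)).
have key x y : q_map Qb x = q_map Qb y -> f x = f y.
  move=> e; have : J (x - y).
    by apply/(q_ker Qb); rewrite (homB (q_hom Qb)) e subrr.
  move/hJ; rewrite (homB hf) => /eqP; rewrite subr_eq0 => /eqP //.
exists (fun y => f (pre y)); split; last by move=> x; apply: key; rewrite preP.
have hq := q_hom Qb.
split; first split.
- move=> x y; rewrite -(homD hf); apply: key; by rewrite (homD hq) !preP.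
- move=> x y; rewrite -(homM hf); apply: key; by rewrite (homM hq) !preP.
- have [[_ _ f1] _] := hf; rewrite -f1; apply: key; rewrite preP.
  by have [[_ _ ->] _] := hq.
- move=> c; have [_ fk] := hf; rewrite -fk; apply: key; rewrite preP.
  by have [_ ->] := hq.
Qed.
End Gen.

Section Hopf.
Variables (k : fieldType) (A H : kalg k) (HA : hopf_algebroid A H).
Local Notation s := (ha_s HA).
Local Notation t := (ha_t HA).
Local Notation eps := (ha_eps HA).
Local Notation S := (ha_S HA).
Local Notation T2 := (ha_T2 HA).
Local Notation T3 := (ha_T3 HA).
Local Notation Delta := (ha_Delta HA).

Let hs := ha_s_hom HA.
Let ht := ha_t_hom HA.
Let heps := ha_eps_hom HA.
Let hS := ha_S_hom HA.
Let hD := ha_Delta_hom HA.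
Let hi1 := po_i1_hom T2.
Let hi2 := po_i2_hom T2.
Let hj1 := po_i1_hom T3.
Let hj2 := po_i2_hom T3.

Definition D3 h := po_lift T2 (po_T T3) (fun x => po_i1 T3 (Delta x)) (po_i2 T3) (Delta h).
Definition D3' h := po_lift T2 (po_T T3)
      (fun x => po_i1 T3 (po_i1 T2 x))
      (fun x => po_lift T2 (po_T T3)
                  (fun y => po_i1 T3 (po_i2 T2 y)) (po_i2 T3)
                  (Delta x)) (Delta h).

Lemma c3 a : po_i1 T3 (Delta (t a)) = po_i2 T3 (s a).
Proof. by rewrite ha_Delta_t; exact: (po_comm T3). Qed.
Lemma c3' a : po_i1 T3 (po_i2 T2 (t a)) = po_i2 T3 (s a).
Proof. exact: (po_comm T3). Qed.

Lemma hDD : kalg_hom (fun x => po_i1 T3 (Delta x)).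
Proof. exact: hom_comp. Qed.
Lemma hD3l : kalg_hom (po_lift T2 (po_T T3) (fun x => po_i1 T3 (Delta x)) (po_i2 T3)).
Proof. apply: lift_hom => //; [exact: hDD | exact: c3]. Qed.

Lemma L1 (R : kalg k) (u v w : H -> R) : kalg_hom u -> kalg_hom v -> kalg_hom w ->
  (forall a, u (t a) = v (s a)) -> (forall a, v (t a) = w (s a)) -> forall h,
  po_lift T3 R (po_lift T2 R u v) w (D3 h) =
  po_lift T2 R (fun x => po_lift T2 R u v (Delta x)) w (Delta h).
Proof.
move=> hu hv hw c1 c2 h.
have huv : kalg_hom (po_lift T2 R u v) by exact: lift_hom.
have cuv : forall a, po_lift T2 R u v (po_i2 T2 (t a)) = w (s a).
  by move=> a; rewrite lift_i2.
rewrite /D3.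
apply: (lift_uniq (p := T2) (h := fun y => po_lift T3 R (po_lift T2 R u v) w
    (po_lift T2 (po_T T3) (fun x => po_i1 T3 (Delta x)) (po_i2 T3) y))).
- exact: hom_comp.
- exact: hw.
- by move=> a; rewrite ha_Delta_t.
- apply: hom_comp; first exact: hD3l.
  exact: lift_hom.
- by move=> b; rewrite lift_i1 //; [rewrite lift_i1 | exact: hDD | exact: c3].
- by move=> b; rewrite lift_i2 //; [rewrite lift_i2 | exact: hDD | exact: c3].
Qed.

Lemma L2 (R : kalg k) (u v w : H -> R) : kalg_hom u -> kalg_hom v -> kalg_hom w ->
  (forall a, u (t a) = v (s a)) -> (forall a, v (t a) = w (s a)) -> forall h,
  po_lift T3 R (po_lift T2 R u v) w (D3' h) =
  po_lift T2 R u (fun x => po_lift T2 R v w (Delta x)) (Delta h).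
Proof.
move=> hu hv hw c1 c2 h.
have huv : kalg_hom (po_lift T2 R u v) by exact: lift_hom.
have cuv : forall a, po_lift T2 R u v (po_i2 T2 (t a)) = w (s a).
  by move=> a; rewrite lift_i2.
have hvw : kalg_hom (po_lift T2 R v w) by exact: lift_hom.
have hii : kalg_hom (fun y => po_i1 T3 (po_i2 T2 y)) := hom_comp (po_i2_hom T2) (po_i1_hom T3).
have hi11 : kalg_hom (fun y => po_i1 T3 (po_i1 T2 y)) := hom_comp (po_i1_hom T2) (po_i1_hom T3).
have hj2' := po_i2_hom T3.
have hin : kalg_hom (po_lift T2 (po_T T3) (fun y => po_i1 T3 (po_i2 T2 y)) (po_i2 T3)).
  exact: (@lift_hom _ _ _ _ _ _ T2 (po_T T3) _ _ hii hj2' c3').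
have inner : forall y, po_lift T3 R (po_lift T2 R u v) w
     (po_lift T2 (po_T T3) (fun y => po_i1 T3 (po_i2 T2 y)) (po_i2 T3) y) =
     po_lift T2 R v w y.
  apply: (lift_uniq (p := T2) (h := fun y => po_lift T3 R (po_lift T2 R u v) w
     (po_lift T2 (po_T T3) (fun y => po_i1 T3 (po_i2 T2 y)) (po_i2 T3) y))) => //.
  - exact: (hom_comp hin (lift_hom T3 huv hw cuv)).
  - by move=> b; rewrite (lift_i1 T2 hii hj2' c3') (lift_i1 T3 huv hw cuv) (lift_i2 T2 hu hv c1).
  - by move=> b; rewrite (lift_i2 T2 hii hj2' c3') (lift_i2 T3 huv hw cuv).
have hout_c : forall a, po_i1 T3 (po_i1 T2 (t a)) =
   po_lift T2 (po_T T3) (fun y => po_i1 T3 (po_i2 T2 y)) (po_i2 T3) (Delta (s a)).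
  by move=> a; rewrite ha_Delta_s (lift_i1 T2 hii hj2' c3') (po_comm T2).
have hin' : kalg_hom (fun x => po_lift T2 (po_T T3) (fun y => po_i1 T3 (po_i2 T2 y)) (po_i2 T3) (Delta x)).
  exact: (hom_comp hD hin).
have hout : kalg_hom (po_lift T2 (po_T T3) (fun x => po_i1 T3 (po_i1 T2 x))
      (fun x => po_lift T2 (po_T T3) (fun y => po_i1 T3 (po_i2 T2 y)) (po_i2 T3) (Delta x))).
  exact: (lift_hom T2 hi11 hin' hout_c).
have hvwD : kalg_hom (fun x => po_lift T2 R v w (Delta x)) := hom_comp hD hvw.
have cfin : forall a, u (t a) = po_lift T2 R v w (Delta (s a)).
  by move=> a; rewrite ha_Delta_s (lift_i1 T2 hv hw c2).
rewrite /D3'.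
apply: (lift_uniq (p := T2) (h := fun y => po_lift T3 R (po_lift T2 R u v) w
   (po_lift T2 (po_T T3) (fun x => po_i1 T3 (po_i1 T2 x))
      (fun x => po_lift T2 (po_T T3) (fun y => po_i1 T3 (po_i2 T2 y)) (po_i2 T3) (Delta x)) y))) => //.
- exact: (hom_comp hout (lift_hom T3 huv hw cuv)).
- by move=> b; rewrite (lift_i1 T2 hi11 hin' hout_c) (lift_i1 T3 huv hw cuv) (lift_i1 T2 hu hv c1).
- by move=> b; rewrite (lift_i2 T2 hi11 hin' hout_c) inner.
Qed.

Lemma counit_nat (R : kalg k) (phi : H -> R) (x : A -> R) : kalg_hom phi ->
  (forall a, phi (s a) = x a) -> forall h,
  po_lift T2 R (fun y => x (eps y)) phi (Delta h) = phi h.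
Proof.
move=> hphi e h.
have hse : kalg_hom (fun y => s (eps y)) by exact: hom_comp.
have cse : forall a, s (eps (t a)) = s a by move=> a; rewrite ha_eps_t.
transitivity (po_lift T2 R (fun y => phi (s (eps y))) (fun y => phi y) (Delta h)).
  symmetry; apply: lift_ext.
  - exact: (hom_comp hse hphi).
  - exact: hphi.
  - by move=> a /=; rewrite cse.
  - by move=> y; rewrite e.
  - by [].
rewrite -(lift_nat (p := T2) hphi hse (hom_id H) cse).
by rewrite ha_counit_l.
Qed.

Lemma counit_nat_r (R : kalg k) (phi : H -> R) (x : A -> R) : kalg_hom phi ->
  (forall a, phi (t a) = x a) -> forall h,
  po_lift T2 R phi (fun y => x (eps y)) (Delta h) = phi h.
Proof.
move=> hphi e h.
have hte : kalg_hom (fun y => t (eps y)) by exact: hom_comp.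
have cte : forall a, t a = t (eps (s a)) by move=> a; rewrite ha_eps_s.
transitivity (po_lift T2 R (fun y => phi y) (fun y => phi (t (eps y))) (Delta h)).
  symmetry; apply: lift_ext.
  - exact: hphi.
  - exact: (hom_comp hte hphi).
  - by move=> a /=; rewrite -cte.
  - by [].
  - by move=> y; rewrite e.
rewrite -(lift_nat (p := T2) hphi (hom_id H) hte cte).
by rewrite ha_counit_r.
Qed.

Lemma antip_r (R : kalg k) (g : H -> R) : kalg_hom g -> forall h,
  po_lift T2 R g (fun y => g (S y)) (Delta h) = g (s (eps h)).
Proof.
move=> hg h.
have c : forall a, t a = S (s a) by move=> a; rewrite ha_S_s.
by rewrite -(lift_nat (p := T2) hg (hom_id H) hS c) ha_antipode_r.
Qed.

Lemma antip_l (R : kalg k) (g : H -> R) : kalg_hom g -> forall h,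
  po_lift T2 R (fun y => g (S y)) g (Delta h) = g (t (eps h)).
Proof.
move=> hg h.
have c : forall a, S (t a) = s a by move=> a; rewrite ha_S_t.
by rewrite -(lift_nat (p := T2) hg hS (hom_id H) c) ha_antipode_l.
Qed.

Lemma S_inverse (R : kalg k) (g : H -> R) : kalg_hom g -> is_inverse HA g (fun y => g (S y)).
Proof.
move=> hg; split; first exact: hom_comp.
split; first by move=> a; rewrite /gsrc /gtgt ha_S_s.
split; first by move=> a; rewrite /gsrc /gtgt ha_S_t.
split; first by move=> h; rewrite /gcomp antip_r.
by move=> h; rewrite /gcomp antip_l.
Qed.

Lemma inv_unique (R : kalg k) (g g' : H -> R) : kalg_hom g -> is_inverse HA g g' ->
  forall h, g' h = g (S h).
Proof.
move=> hg [hg' [e1 [e2 [e3 e4]]]] h.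
have hgS : kalg_hom (fun y => g (S y)) by exact: hom_comp.
have c1 : forall a, g' (t a) = g (s a) by move=> a; have := e2 a.
have c2 : forall a, g (t a) = g (S (s a)) by move=> a; rewrite ha_S_s.
have E := congr1 (po_lift T3 R (po_lift T2 R g' g) (fun y => g (S y))) (ha_coassoc HA h).
rewrite -/(D3 h) -/(D3' h) in E.
rewrite L1 // L2 // in E.
have hl : kalg_hom (fun x => po_lift T2 R g' g (Delta x)) := hom_comp hD (lift_hom T2 hg' hg c1).
have cl : forall a, po_lift T2 R g' g (Delta (t a)) = g (S (s a)).
  by move=> a; rewrite ha_Delta_t (lift_i2 T2 hg' hg c1) ha_S_s.
have E1 : po_lift T2 R (fun x => po_lift T2 R g' g (Delta x)) (fun y => g (S y)) (Delta h) = g (S h).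
  rewrite (lift_ext (p := T2) (u' := fun x => g (t (eps x))) (v' := fun y => g (S y)) hl hgS cl).
  - by apply: (counit_nat (x := fun a => g (t a))) => // a; rewrite ha_S_s.
  - by move=> x; have := e4 x.
  - by [].
have hgsS := lift_hom T2 hg hgS c2.
have hr : kalg_hom (fun x => po_lift T2 R g (fun y => g (S y)) (Delta x)) := hom_comp hD hgsS.
have cr : forall a, g' (t a) = po_lift T2 R g (fun y => g (S y)) (Delta (s a)).
  by move=> a; rewrite ha_Delta_s (lift_i1 T2 hg hgS c2) c1.
have E2 : po_lift T2 R g' (fun x => po_lift T2 R g (fun y => g (S y)) (Delta x)) (Delta h) = g' h.
  rewrite (lift_ext (p := T2) (u' := g') (v' := fun x => g (s (eps x))) hg' hr cr).
  - exact: (counit_nat_r (x := fun a => g (s a))).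
  - by [].
  - by move=> x; rewrite antip_r.
by rewrite -E2 -E E1.
Qed.

Lemma gcomp_hom (R : kalg k) (psi phi : H -> R) : kalg_hom psi -> kalg_hom phi ->
  (forall a, phi (t a) = psi (s a)) -> kalg_hom (gcomp HA psi phi).
Proof. by move=> h1 h2 c; apply: hom_comp => //; apply: lift_hom. Qed.

Lemma conj_formula (R : kalg k) (g f g' : H -> R) : kalg_hom g -> kalg_hom f ->
  (forall a, gsrc HA f a = gsrc HA g a) -> (forall a, gtgt HA f a = gsrc HA g a) ->
  is_inverse HA g g' ->
  kalg_hom (gcomp HA g (gcomp HA f g')) /\
  forall h, gcomp HA g (gcomp HA f g') h =
    po_lift T3 R (po_lift T2 R (fun y => g (S y)) f) g (D3 h).
Proof.
move=> hg hf e1 e2 hinv.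
have eg : g' = (fun y => g (S y)) by apply: functional_extensionality; exact: inv_unique.
subst g'.
have c1 : forall a, g (S (t a)) = f (s a) by move=> a; rewrite ha_S_t; symmetry; exact: e1.
have c2 : forall a, f (t a) = g (s a) by move=> a; exact: e2.
have hgS : kalg_hom (fun y => g (S y)) by exact: hom_comp.
have hfg : kalg_hom (gcomp HA f (fun y => g (S y))) by exact: gcomp_hom.
split.
  apply: gcomp_hom => // a; by rewrite /gcomp ha_Delta_t lift_i2.
by move=> h; rewrite L1.
Qed.

Section WithQ.
Variables (Hb : quotient_alg (st_ideal HA))
    (Q : pushout (fun a => q_map Hb (ha_s HA a)) (ha_s HA)).
Local Notation q := (q_map Hb).
Let hq := q_hom Hb.
Let hk1 := po_i1_hom Q.
Let hk2 := po_i2_hom Q.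

Lemma st_in a : st_ideal HA (s a - t a).
Proof. by apply: ideal_gen_in; exists a. Qed.

Lemma qst a : q (t a) = q (s a).
Proof.
have := (proj2 (q_ker Hb _)) (st_in a); rewrite (homB hq) => /eqP.
by rewrite subr_eq0 => /eqP.
Qed.

Lemma nm_nat (R : kalg k) (Phi : po_T Q -> R) : kalg_hom Phi -> forall x,
  Phi (normality_map Hb Q x) =
  po_lift T3 R (po_lift T2 R (fun y => Phi (po_i2 Q (S y))) (fun y => Phi (po_i1 Q (q y))))
     (fun y => Phi (po_i2 Q y)) (D3 x).
Proof.
move=> hP x.
have h1 : kalg_hom (fun y => po_i2 Q (S y)) by exact: hom_comp.
have h2 : kalg_hom (fun y => po_i1 Q (q y)) by exact: hom_comp.
have cc : forall a, po_i2 Q (S (t a)) = po_i1 Q (q (s a)) by move=> a; rewrite ha_S_t (po_comm Q).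
have hl : kalg_hom (po_lift T2 (po_T Q) (fun y => po_i2 Q (S y)) (fun y => po_i1 Q (q y))).
  exact: lift_hom.
have cc2 : forall a, po_lift T2 (po_T Q) (fun y => po_i2 Q (S y)) (fun y => po_i1 Q (q y)) (po_i2 T2 (t a))
    = po_i2 Q (s a).
  by move=> a; rewrite lift_i2 // qst (po_comm Q).
rewrite /normality_map -/(D3 x) (lift_nat (p := T3) hP hl hk2 cc2).
congr (po_lift T3 R _ _ _); apply: functional_extensionality => y.
by rewrite (lift_nat (p := T2) hP h1 h2 cc).
Qed.

Lemma forward (I : H -> Prop) : normal_hopf_ideal Hb Q I -> normal_affine_subgroupoid HA I.
Proof.
move=> [hI [stI nI]] R; split.
  move=> f [hf fI] a; rewrite /gsrc /gtgt.
  have := fI _ (stI _ (st_in a)); rewrite (homB hf) => /eqP; rewrite subr_eq0 => /eqP //.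
move=> g f hg [hf fI] e1 e2 g' hinv.
have [hc ec] := conj_formula hg hf e1 e2 hinv.
split => // x xI.
have [fb [hfb efb]] := factor Hb hf (fun y sy => fI y (stI y sy)).
have cQ : forall a, fb (q (s a)) = g (s a) by move=> a; rewrite efb; exact: e1.
pose Phi := po_lift Q R fb g.
have hP : kalg_hom Phi by exact: lift_hom.
have : Phi (normality_map Hb Q x) = 0.
  apply: (ideal_gen_kill hP _ (nI x xI)) => y [z [zI ->]].
  by rewrite /Phi lift_i1 // efb fI.
rewrite nm_nat // ec.
have -> : (fun y => Phi (po_i2 Q (S y))) = (fun y => g (S y)).
  by apply: functional_extensionality => y; rewrite /Phi lift_i2.
have -> : (fun y => Phi (po_i1 Q (q y))) = f.
  by apply: functional_extensionality => y; rewrite /Phi lift_i1.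
have -> : (fun y => Phi (po_i2 Q y)) = g.
  by apply: functional_extensionality => y; rewrite /Phi lift_i2.
by [].
Qed.

Lemma backward (I : H -> Prop) : hopf_ideal HA I -> normal_affine_subgroupoid HA I ->
  normal_hopf_ideal Hb Q I.
Proof.
move=> hI nA; have [idI _ _ _] := hI.
have stI : forall x, st_ideal HA x -> I x.
  move=> x; apply: (@ideal_gen_sub k H (fun y => exists a, y = s a - t a) I x idI) => y [a ->].
  pose Qi := quot idI.
  have sa : sub_arrow I (q_map Qi) by split; [exact: q_hom | move=> z zI; apply/(q_ker Qi)].
  have := (proj1 (nA (q_T Qi))) _ sa a; rewrite /gsrc /gtgt => e.
  by apply/(q_ker Qi); rewrite (homB (q_hom Qi)) e subrr.
split => //; split => // x xI.
pose G := fun y : po_T Q => exists z, I z /\ y = po_i1 Q (q z).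
pose Qj := quot (ideal_gen_ideal G).
pose pi := q_map Qj.
have hpi : kalg_hom pi := q_hom Qj.
pose f := fun y => pi (po_i1 Q (q y)).
pose g := fun y => pi (po_i2 Q y).
have hf : kalg_hom f by apply: hom_comp => //; exact: hom_comp.
have hg : kalg_hom g by exact: hom_comp.
have sf : sub_arrow I f.
  split => // z zI; apply/(q_ker Qj); apply: ideal_gen_in; by exists z.
have e1 : forall a, gsrc HA f a = gsrc HA g a by move=> a; rewrite /gsrc /f /g (po_comm Q).
have e2 : forall a, gtgt HA f a = gsrc HA g a by move=> a; rewrite /gsrc /gtgt /f /g qst (po_comm Q).
have hinv := S_inverse hg.
have [_ ck] := (proj2 (nA (q_T Qj))) g f hg sf e1 e2 _ hinv.
have [_ ec] := conj_formula hg hf e1 e2 hinv.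
have := ck x xI; rewrite ec -(nm_nat hpi) => /(q_ker Qj) //.
Qed.
End WithQ.
End Hopf.

Theorem proposition3p19 (k : fieldType) (A H : kalg k)
    (HA : hopf_algebroid A H)
    (Hb : quotient_alg (st_ideal HA))
    (Q : pushout (fun a => q_map Hb (ha_s HA a)) (ha_s HA)) :
  (* a Hopf ideal is normal iff its affine subgroupoid is normal *)
  (forall I : H -> Prop, hopf_ideal HA I ->
     (normal_hopf_ideal Hb Q I <-> normal_affine_subgroupoid HA I)) /\
  (* injectivity of I |-> G_{H/I} on normal Hopf ideals *)
  (forall I J : H -> Prop,
     normal_hopf_ideal Hb Q I -> normal_hopf_ideal Hb Q J ->
     same_subgroupoid I J -> forall x, I x <-> J x) /\
  (* surjectivity onto normal affine subgroupoids *)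
  (forall I : H -> Prop, hopf_ideal HA I -> normal_affine_subgroupoid HA I ->
     exists J : H -> Prop, normal_hopf_ideal Hb Q J /\ same_subgroupoid I J).
Proof.
split.
  move=> I hI; split; [exact: forward | exact: backward].
split.
  move=> I J [[idI _ _ _] _] [[idJ _ _ _] _] same x; split => hx.
  - pose Qj := quot idJ.
    have sa : sub_arrow J (q_map Qj) by split; [exact: q_hom | move=> z zJ; apply/(q_ker Qj)].
    have [_ kI] := proj2 (same _ _) sa.
    by apply/(q_ker Qj); apply: kI.
  - pose Qi := quot idI.
    have sa : sub_arrow I (q_map Qi) by split; [exact: q_hom | move=> z zI; apply/(q_ker Qi)].
    have [_ kJ] := proj1 (same _ _) sa.
    by apply/(q_ker Qi); apply: kJ.
move=> I hI hN; exists I; split; first exact: backward.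
by move=> R phi.
Qed.
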